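(* Let $F$ be an algebraically closed field of characteristic zero, $G$ a finite group, $A$ a finite dimensional full $G$-graded algebra over $F$, and $f_0$ a multilinear $G$-graded polynomial which is weakly full of $A$. Then there exists a multilinear $G$-graded strongly full polynomial $f$ of $A$ such that $f\in\langle f_0\rangle_T$.
   Context: Let $A\cong A_1\times\cdots\times A_q\oplus J_A$ be the graded Wedderburn–Malcev decomposition, with $A_i$ $G$-graded simple and $J_A$ the Jacobson radical; $A$ is full if, up to permuting indices, $A_1J_AA_2\cdots J_AA_q\neq0$. Fix a homogeneous basis of $A$ consisting of homogeneous bases of each $A_i$ (elements of the form $u_h\otimes e_{r,s}$ from the standard presentation of graded simple algebras) together with a homogeneous basis of $J_A$; an evaluation of a multilinear $G$-graded polynomial is admissible if each variable is assigned a basis element of its own degree. A multilinear $G$-graded polynomial is weakly full of $A$ if it has a nonzero admissible evaluation visiting every graded simple component $A_i$; it is strongly full of $A$ if it is a nonidentity of $A$ and every basis element of $A_{ss}$ occurs as a value in every nonzero admissible evaluation. $\langle f_0\rangle_T$ is the $G$-graded $T$-ideal generated by $f_0$. *)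

(* Defs.v *)
From HB Require Import structures.
From mathcomp Require Import all_boot all_order all_fingroup all_algebra.
Set Implicit Arguments. Unset Strict Implicit. Unset Printing Implicit Defensive.
Import GRing.Theory.
Local Open Scope ring_scope.

Section Algebra.
Variables (F : fieldType) (G : finGroupType) (V : vectType F).
Variable mul : V -> V -> V.

Definition assoc_bilinear : Prop :=
  [/\ forall a, linear (mul a), forall b, linear (mul^~ b)
    & forall a b c, mul a (mul b c) = mul (mul a b) c].

Definition graded_algebra (deg : G -> {vspace V}) : Prop :=
  [/\ assoc_bilinear,
      (\sum_(g : G) deg g)%VS = fullv,
      directv (\sum_(g : G) deg g)
    & forall (g h : G) a b, a \in deg g -> b \in deg h -> mul a b \in deg (g * h)%g].

Definition prodl (s : seq V) : V :=
  if s is x :: s' then foldl mul x s' else 0.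

Definition is_ideal (U : {vspace V}) : Prop :=
  forall a u, u \in U -> mul a u \in U /\ mul u a \in U.

Definition nilpotent_sp (U : {vspace V}) : Prop :=
  exists n : nat, forall s : seq V,
    size s = n.+1 -> all (fun x => x \in U) s -> prodl s = 0.

(* Jacobson radical of a finite dimensional algebra: the largest nilpotent *)
(* two-sided ideal.                                                        *)
Definition is_radical (U : {vspace V}) : Prop :=
  [/\ is_ideal U, nilpotent_sp U
    & forall I : {vspace V}, is_ideal I -> nilpotent_sp I -> (I <= U)%VS].

End Algebra.

(* Data of a graded Wedderburn-Malcev decomposition                       *)
(*   A = A_1 x ... x A_q (+) J_A                                          *)
(* with A_i = F^{alpha_i}[H_i] (x) M_{k_i}(F), presented through its      *)
(* standard basis  b i h r s = u_h (x) e_{r,s}  (h in H_i), of degree     *)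
(* (g_{i,r})^-1 h g_{i,s}, and a homogeneous basis bJ of J_A.             *)

Unset Implicit Arguments.
Record WMdata (F : fieldType) (G : finGroupType) (V : vectType F) := WMData {
  wm_q : nat;
  wm_H : 'I_wm_q -> {group G};
  wm_k : 'I_wm_q -> nat;
  wm_g : forall i, 'I_(wm_k i) -> G;
  wm_alpha : 'I_wm_q -> G -> G -> F;
  wm_b : forall i, G -> 'I_(wm_k i) -> 'I_(wm_k i) -> V;
  wm_m : nat;
  wm_bJ : 'I_wm_m -> V;
  wm_dJ : 'I_wm_m -> G }.
Arguments wm_q {F G V} _.
Arguments wm_H {F G V} _ _.
Arguments wm_k {F G V} _ _.
Arguments wm_g {F G V} _ _ _.
Arguments wm_alpha {F G V} _ _ _ _.
Arguments wm_b {F G V} _ _ _ _ _.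
Arguments wm_m {F G V} _.
Arguments wm_bJ {F G V} _ _.
Arguments wm_dJ {F G V} _ _.
Set Implicit Arguments.

Section WM.
Variables (F : fieldType) (G : finGroupType) (V : vectType F).
Variables (mul : V -> V -> V) (deg : G -> {vspace V}) (D : WMdata F G V).

Local Notation q := (wm_q D).
Local Notation H := (wm_H D).
Local Notation k := (wm_k D).
Local Notation b := (wm_b D).

Definition comp_basis (i : 'I_q) : seq V :=
  flatten [seq [seq b i h r s | r <- enum 'I_(k i), s <- enum 'I_(k i)]
          | h <- enum (H i)].

Definition J_basis : seq V := [seq wm_bJ D l | l <- enum 'I_(wm_m D)].

Definition WM_basis : seq V :=
  flatten [seq comp_basis i | i <- enum 'I_q] ++ J_basis.

Definition comp_sp (i : 'I_q) : {vspace V} := <<comp_basis i>>%VS.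
Definition J_sp : {vspace V} := <<J_basis>>%VS.

Definition graded_WM : Prop :=
  (forall i, (0 < k i)%N) /\
  (forall i h h', h \in H i -> h' \in H i -> wm_alpha D i h h' != 0) /\
  (forall i h r s, h \in H i ->
      b i h r s \in deg ((wm_g D i r)^-1 * h * wm_g D i s)%g) /\
  (* multiplication table of F^alpha[H_i] (x) M_k(F) *)
  (forall i h h' r s r' s', h \in H i -> h' \in H i ->
      mul (b i h r s) (b i h' r' s') =
      if s == r' then wm_alpha D i h h' *: b i (h * h')%g r s' else 0) /\
  (forall i j h h' r s r' s', i != j -> h \in H i -> h' \in H j ->
      mul (b i h r s) (b j h' r' s') = 0) /\
  (forall l, wm_bJ D l \in deg (wm_dJ D l)) /\
  basis_of fullv WM_basis /\
  is_radical mul J_sp.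

Definition chainprod (a z : 'I_q -> V) (s : seq 'I_q) : V :=
  if s is i0 :: s' then foldl (fun acc i => mul (mul acc (z i)) (a i)) (a i0) s'
  else 0.

Definition full : Prop :=
  exists (s : seq 'I_q) (a z : 'I_q -> V),
    [/\ perm_eq s (enum 'I_q), (forall i, a i \in comp_sp i),
        (forall i, z i \in J_sp) & chainprod a z s != 0].

Definition in_ss_basis (x : V) : Prop :=
  exists i h r s, h \in H i /\ x = b i h r s.

Definition in_basis (x : V) : Prop :=
  in_ss_basis x \/ exists l, x = wm_bJ D l.

End WM.

(* Variables are x_{n,g} = (n, g) : nat * G, of degree g.  A polynomial   *)
(* is represented by a formal finite sum of terms (coefficient, word);    *)
(* two representations denote the same polynomial iff they have the same  *)
(* coefficient function coefp.                                            *)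

Section FreeAlg.
Variables (F : fieldType) (G : finGroupType).

Definition gvar := (nat * G)%type.
Definition word := seq gvar.
Definition ncpoly := seq (F * word).

Definition coefp (p : ncpoly) (w : word) : F := \sum_(t <- p | t.2 == w) t.1.

Definition varsp (p : ncpoly) (x : gvar) : bool :=
  has (fun t => (coefp p t.2 != 0) && (x \in t.2)) p.

Definition multilinear (p : ncpoly) : Prop :=
  exists vs : seq gvar, [/\ (0 < size vs)%N, uniq vs &
    forall w, coefp p w != 0 -> perm_eq w vs].

Definition wdeg (w : word) : G := foldr (fun x acc => (x.2 * acc)%g) 1%g w.

Definition homogeneous (g : G) (p : ncpoly) : Prop :=
  forall w, coefp p w != 0 -> wdeg w = g.

Definition mulp (p r : ncpoly) : ncpoly :=
  [seq (u.1 * v.1, u.2 ++ v.2) | u <- p, v <- r].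

Definition graded_subst (phi : gvar -> ncpoly) : Prop :=
  forall x, homogeneous x.2 (phi x) /\ coefp (phi x) [::] = 0.

Definition substw (phi : gvar -> ncpoly) (w : word) : ncpoly :=
  foldr (fun x acc => mulp (phi x) acc) [:: (1, [::])] w.

Definition substp (phi : gvar -> ncpoly) (p : ncpoly) : ncpoly :=
  flatten [seq [seq (t.1 * u.1, u.2) | u <- substw phi t.2] | t <- p].

Definition sandwich (c : F) (a bw : word) (r : ncpoly) : ncpoly :=
  [seq (c * u.1, a ++ u.2 ++ bw) | u <- r].

Definition in_Tideal (f0 f : ncpoly) : Prop :=
  exists (n : nat) (c : 'I_n -> F) (a bw : 'I_n -> word) (phi : 'I_n -> gvar -> ncpoly),
    (forall j, graded_subst (phi j)) /\
    forall w, coefp f w =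
      coefp (flatten [seq sandwich (c j) (a j) (bw j) (substp (phi j) f0)
                     | j <- enum 'I_n]) w.

End FreeAlg.

Section Full.
Variables (F : fieldType) (G : finGroupType) (V : vectType F).
Variables (mul : V -> V -> V) (deg : G -> {vspace V}) (D : WMdata F G V).

Definition evalp (v : gvar G -> V) (p : ncpoly F G) : V :=
  \sum_(t <- p) t.1 *: prodl mul (map v t.2).

Definition admissible (p : ncpoly F G) (v : gvar G -> V) : Prop :=
  forall x, varsp p x -> in_basis D (v x) /\ v x \in deg x.2.

Definition graded_eval (v : gvar G -> V) : Prop := forall x, v x \in deg x.2.

Definition nonidentity (p : ncpoly F G) : Prop :=
  exists v, graded_eval v /\ evalp v p != 0.

Definition weakly_full (p : ncpoly F G) : Prop :=
  exists v, [/\ admissible p v, evalp v p != 0 &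
    forall i : 'I_(wm_q D), exists x, varsp p x /\
      exists h r s, h \in wm_H D i /\ v x = wm_b D i h r s].

Definition strongly_full (p : ncpoly F G) : Prop :=
  nonidentity p /\
  forall v, admissible p v -> evalp v p != 0 ->
    forall (i : 'I_(wm_q D)) h r s, h \in wm_H D i ->
      exists x, varsp p x /\ v x = wm_b D i h r s.

End Full.

(* Main.v *)
Require Import Defs.
From HB Require Import structures.
From mathcomp Require Import all_boot all_order all_fingroup all_algebra zify.
From Stdlib Require Import Classical.
Set Implicit Arguments. Unset Strict Implicit. Unset Printing Implicit Defensive.
Import GRing.Theory.
Local Open Scope ring_scope.
Local Notation coefp := Defs.coefp.


Section Prod.
Variables (F : fieldType) (V : vectType F) (mul : V -> V -> V).
Hypothesis Hab : assoc_bilinear mul.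

Lemma lin_facts (f : V -> V) : linear f ->
  [/\ f 0 = 0, forall u v, f (u + v) = f u + f v & forall c u, f (c *: u) = c *: f u].
Proof.
move=> Hf.
have H0 : f 0 = 0.
  have := Hf 1 0 0; rewrite !scale1r addr0 => E.
  by apply: (@addrI _ (f 0)); rewrite addr0 -E.
split=> // [u v|c u]; first by have := Hf 1 u v; rewrite !scale1r.
by have := Hf c u 0; rewrite !addr0 H0 addr0.
Qed.

Lemma mulv0 a : mul a 0 = 0.
Proof. by case: Hab => Hl _ _; case: (lin_facts (Hl a)). Qed.
Lemma mul0v a : mul 0 a = 0.
Proof. by case: Hab => _ Hr _; case: (lin_facts (Hr a)). Qed.
Lemma mulvZ a c u : mul a (c *: u) = c *: mul a u.
Proof. by case: Hab => Hl _ _; case: (lin_facts (Hl a)). Qed.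
Lemma mulZv a c u : mul (c *: u) a = c *: mul u a.
Proof. by case: Hab => _ Hr _; case: (lin_facts (Hr a)). Qed.
Lemma mulvD a u v : mul a (u + v) = mul a u + mul a v.
Proof. by case: Hab => Hl _ _; case: (lin_facts (Hl a)). Qed.
Lemma mulDv a u v : mul (u + v) a = mul u a + mul v a.
Proof. by case: Hab => _ Hr _; case: (lin_facts (Hr a)). Qed.
Lemma mulA a b c : mul a (mul b c) = mul (mul a b) c.
Proof. by case: Hab. Qed.

Lemma foldl_mulA x y s : foldl mul (mul x y) s = mul x (foldl mul y s).
Proof. by elim: s y => //= z s IH y; rewrite -mulA IH. Qed.

Lemma prodl_cat s1 s2 : s1 != [::] -> s2 != [::] ->
  prodl mul (s1 ++ s2) = mul (prodl mul s1) (prodl mul s2).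
Proof.
case: s1 => // a s1 _; case: s2 => // b s2 _ /=.
by rewrite foldl_cat /= foldl_mulA.
Qed.

Lemma prodl_cons a s : s != [::] -> prodl mul (a :: s) = mul a (prodl mul s).
Proof. by move=> ns; rewrite -cat1s prodl_cat. Qed.

Lemma prodl_flatten (bs : seq (seq V)) : all (fun s => s != [::]) bs ->
  prodl mul (flatten bs) = prodl mul (map (prodl mul) bs).
Proof.
elim: bs => // s bs IH /= /andP[ns nbs].
case: bs IH nbs => [|s' bs] IH nbs; first by rewrite cats0.
rewrite prodl_cat //; last by case: s' nbs {IH}.
by rewrite IH //= foldl_mulA.
Qed.

Lemma prodl0 s : 0 \in s -> prodl mul s = 0.
Proof.
elim: s => // a s IH; rewrite inE => /orP[/eqP<-|].
  case: s {IH} => //= b s; rewrite mul0v.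
  by elim: s => //= c s IH2; rewrite mul0v.
move=> s0; have ns : s != [::] by case: s s0 {IH}.
by rewrite prodl_cons // IH // mulv0.
Qed.

Lemma foldl_scale (T : Type) (c : T -> F) (w : T -> V) (s : seq T) a k :
  foldl mul (k *: a) (map (fun x => c x *: w x) s) = (k * \prod_(x <- s) c x) *: foldl mul a (map w s).
Proof.
elim: s a k => /= [|b s IH] a k; first by rewrite big_nil mulr1.
by rewrite mulZv mulvZ scalerA IH big_cons mulrA [k * _]mulrC.
Qed.

Lemma prodl_scale (T : Type) (c : T -> F) (w : T -> V) (s : seq T) :
  prodl mul (map (fun x => c x *: w x) s) = (\prod_(x <- s) c x) *: prodl mul (map w s).
Proof.
case: s => [|a s] /=; first by rewrite scaler0.
by rewrite foldl_scale big_cons.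
Qed.

Lemma prodl_rcons s x : s != [::] -> prodl mul (rcons s x) = mul (prodl mul s) x.
Proof. by case: s => // a s _; rewrite /= foldl_rcons. Qed.

Lemma prodl_Jzero (U : {vspace V}) n : is_ideal mul U ->
  (forall s : seq V, size s = n.+1 -> all (fun x => x \in U) s -> prodl mul s = 0) ->
  forall s, (n < count (fun x => x \in U) s)%N -> prodl mul s = 0.
Proof.
move=> Hid Hnil.
pose Inv m acc := exists t : seq V, [/\ size t = m, all (fun x => x \in U) t & (m = 0%N \/ acc = prodl mul t)].
have step : forall s m acc, Inv m acc -> Inv (m + count (fun x => x \in U) s)%N (foldl mul acc s).
  elim=> [|x s IH] m acc [t [st at_ macc]] /=; first by rewrite addn0; exists t.
  rewrite addnA; apply: IH.
  case xU: (x \in U) => /=.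
    case: t st at_ macc => [|a t] st at_ macc.
      exists [:: mul acc x]; rewrite -st /= andbT; split=> //; last by right.
      by case: (Hid acc x xU).
    case: macc => [m0|->]; first by rewrite -st in m0.
    exists (rcons (a :: t) x); rewrite size_rcons st addn1 all_rcons xU at_; split=> //; right.
    by rewrite prodl_rcons.
  rewrite addn0; exists (if t is [::] then t else rcons (belast (head 0 t) (behead t)) (mul (last (head 0 t) (behead t)) x)).
  case: t st at_ macc => [|a t] st at_ macc; first by split=> //; left.
  rewrite /= size_rcons size_belast -st; split=> //.
    move: at_; rewrite lastI !all_rcons => /andP[Hl ->]; rewrite andbT.
    by case: (Hid x (last a t) Hl).
  case: macc => [m0|->]; first by rewrite -st in m0.
  right; case: t {st at_} => [|b t] /=; first by [].
  rewrite -/(prodl mul (a :: belast b t)) -[foldl mul (mul a b) t]/(prodl mul (a :: b :: t)).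
  have -> : a :: b :: t = rcons (a :: belast b t) (last b t) by rewrite lastI.
  by rewrite !prodl_rcons // -mulA -(@prodl_rcons (a :: belast b t)).  
move=> [|x s] //= Hc.
have I0 : Inv (count (fun y => y \in U) [:: x]) x.
  case xU: (x \in U); first by exists [:: x]; rewrite /= xU; split=> //; right.
  by exists [::]; rewrite /= xU; split=> //; left.
have := step s _ _ I0; rewrite -count_cat /= => -[t [st at_ [m0|->]]]; first by rewrite m0 in Hc.
have {Hc}Hc : (n < size t)%N by rewrite st.
have [e|ne] := eqVneq (size t) n.+1; first by apply: Hnil.
have Hlt : (n.+1 < size t)%N by rewrite ltn_neqAle eq_sym ne.

have Htk : size (take n.+1 t) = n.+1 by rewrite size_take Hlt.
rewrite -[t](cat_take_drop n.+1) prodl_cat.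
- rewrite Hnil ?mul0v //; by apply/allP=> y /mem_take /(allP at_).
- by apply/eqP => e; rewrite e in Htk.
apply/eqP => e; have := size_drop n.+1 t; rewrite e /= => /eqP; rewrite eq_sym subn_eq0.
by rewrite leqNgt Hlt.
Qed.


End Prod.

Section PolyGen.
Variables (F : fieldType) (G : finGroupType) (V : vectType F) (mul : V -> V -> V).

Lemma group_sum (K : word G -> V) (p : ncpoly F G) :
  \sum_(t <- p) t.1 *: K t.2 = \sum_(u <- undup (map snd p)) coefp p u *: K u.
Proof.
transitivity (\sum_(u <- undup (map snd p)) \sum_(t <- p) (if t.2 == u then t.1 *: K t.2 else 0 : V)).
  rewrite exchange_big /=; apply: eq_big_seq => t tp.
  have tU : t.2 \in undup (map snd p).
    by rewrite mem_undup; apply: map_f tp.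
  rewrite (bigD1_seq t.2) ?undup_uniq //= eqxx big1 ?addr0 // => u /negbTE.
  by rewrite eq_sym => ->.
apply: eq_bigr => u _; rewrite /coefp scaler_suml [RHS]big_mkcond /=.
by apply: eq_bigr => t _; case: eqP => // ->.
Qed.

Lemma evalp_coef v (p : ncpoly F G) :
  evalp mul v p = \sum_(u <- undup (map snd p)) coefp p u *: prodl mul (map v u).
Proof. by rewrite /evalp (group_sum (fun u => prodl mul (map v u))). Qed.

Lemma evalp_nz_coef v (p : ncpoly F G) : evalp mul v p != 0 ->
  exists2 t, t \in p & coefp p t.2 != 0.
Proof.
rewrite evalp_coef => nz.
have [/hasP [u uin cu]|hn] := boolP (has (fun u => coefp p u != 0) (undup (map snd p))).
  move: uin cu; rewrite mem_undup => /mapP [t tp ->] cu; by exists t.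
case/eqP: nz; rewrite big1_seq // => u /= uin.
by move/hasPn: hn => /(_ u uin); rewrite negbK => /eqP ->; rewrite scale0r.
Qed.

End PolyGen.


Section Main.
Variables (F : fieldType) (G : finGroupType) (V : vectType F).
Variables (mul : V -> V -> V) (deg : G -> {vspace V}) (D : WMdata F G V).
Variable f0 : ncpoly F G.

Local Notation q := (wm_q D).
Local Notation H := (wm_H D).
Local Notation k := (wm_k D).
Local Notation b := (wm_b D).
Local Notation gg := (wm_g D).
Local Notation al := (wm_alpha D).

Hypothesis Hab : assoc_bilinear mul.
Hypothesis Hdir : directv (\sum_(g : G) deg g).
Hypothesis Hdeg : forall i h r s, h \in H i -> b i h r s \in deg ((gg i r)^-1 * h * gg i s)%g.
Hypothesis Hal : forall i h h', h \in H i -> h' \in H i -> al i h h' != 0.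
Hypothesis Hmt : forall i h h' r s r' s', h \in H i -> h' \in H i ->
      mul (b i h r s) (b i h' r' s') =
      if s == r' then al i h h' *: b i (h * h')%g r s' else 0.
Hypothesis Horth : forall i j h h' r s r' s', i != j -> h \in H i -> h' \in H j ->
      mul (b i h r s) (b j h' r' s') = 0.
Hypothesis HdJ : forall l, wm_bJ D l \in deg (wm_dJ D l).
Hypothesis Hbasis : basis_of fullv (WM_basis D).
Hypothesis Hideal : is_ideal mul (J_sp D).
Variable nJ : nat.
Hypothesis HnJ : forall s : seq V, size s = nJ.+1 -> all (fun x => x \in J_sp D) s -> prodl mul s = 0.

Definition SS : seq V := flatten [seq @comp_basis _ _ _ D i | i <- enum 'I_q].
Local Notation N := (size SS).

Lemma SS_uniq : uniq SS.
Proof. by have := free_uniq (basis_free Hbasis); rewrite /WM_basis cat_uniq => /andP[]. Qed.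

Lemma SS_nz x : x \in SS -> x != 0.
Proof. by move=> xS; apply: (free_not0 (basis_free Hbasis)); rewrite /WM_basis mem_cat xS. Qed.

Lemma b_in_SS i h r s : h \in H i -> b i h r s \in SS.
Proof.
move=> hH; apply/flatten_mapP; exists i; rewrite ?mem_enum //.
apply/flatten_mapP; exists h; rewrite ?mem_enum //.
by apply/allpairsP; exists (r, s); rewrite !mem_enum.
Qed.

Lemma SS_dec x : x \in SS -> exists i h (r s : 'I_(k i)), h \in H i /\ x = b i h r s.
Proof.
move=> /flatten_mapP [i _ /flatten_mapP [h hH /allpairsP [[r s] [_ _ /= ->]]]].
by exists i, h, r, s; rewrite -mem_enum.
Qed.

Lemma ss_in_SS x : in_ss_basis D x -> x \in SS.
Proof. by move=> [i [h [r [s [hH ->]]]]]; apply: b_in_SS. Qed.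

Lemma bJ_in l : wm_bJ D l \in J_sp D.
Proof. by apply: memv_span; apply: map_f; rewrite mem_enum. Qed.

Lemma b_nz i h r s : h \in H i -> b i h r s != 0.
Proof. by move=> hH; apply: SS_nz; apply: b_in_SS. Qed.

Lemma deg_uniq x g g' : x != 0 -> x \in deg g -> x \in deg g' -> g = g'.
Proof.
move=> nx xg xg'; apply/eqP; apply/negP => /negP ne.
pose us h := if h == g then x else if h == g' then - x else 0.
have Hs : \sum_(h : G) us h = 0.
  rewrite (bigD1 g) //= /us eqxx (bigD1 g') /=; last by rewrite eq_sym.
  rewrite eq_sym (negbTE ne) eqxx addrA subrr add0r big1 // => h /andP[hg hg'].
  by rewrite (negbTE hg) (negbTE hg').
have Hm : forall h, true -> us h \in deg h.
  move=> h _; rewrite /us; case: eqP => [->//|_]; case: eqP => [->|_]; by rewrite ?memvN ?mem0v.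
have := @directv_sum_independent _ _ _ (fun _ => true) (fun h => deg h).
move=> /(_ Hdir us Hm Hs g isT); rewrite /us eqxx => x0.
by rewrite x0 eqxx in nx.
Qed.


Variables (ip : 'I_N -> 'I_q) (hp : 'I_N -> G) (rp sp : forall p, 'I_(k (ip p))).
Hypothesis Hdec : forall p, hp p \in H (ip p) /\ SS`_p = b (ip p) (hp p) (rp p) (sp p).

Variable vs0 : seq (gvar G).
Hypothesis Hvs0 : (0 < size vs0)%N.
Hypothesis Hvs0u : uniq vs0.
Hypothesis Hf0ml : forall w, coefp f0 w != 0 -> perm_eq w vs0.
Variable v0 : gvar G -> V.
Hypothesis Hadm0 : admissible deg D f0 v0.
Hypothesis Hnz0 : evalp mul v0 f0 != 0.
Variables (xv : 'I_q -> gvar G) (hx : 'I_q -> G) (rx sx : forall i, 'I_(k i)).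
Hypothesis Hxv : forall i, varsp f0 (xv i).
Hypothesis Hhx : forall i, hx i \in H i.
Hypothesis Hvx : forall i, v0 (xv i) = b i (hx i) (rx i) (sx i).

Definition M := nJ.+1.
Local Notation Z := ('I_M * 'I_N)%type.

Definition B0 : nat := (\max_(t <- f0) \max_(x <- t.2) x.1).+1.

Lemma B0_gt t x : t \in f0 -> x \in t.2 -> (x.1 < B0)%N.
Proof.
move=> tf xt; rewrite /B0 ltnS.
apply: leq_trans (leq_bigmax_seq _ _ _ ) (leq_bigmax_seq _ tf _) => //.
Qed.

Definition dg (p : 'I_N) : G := ((gg (ip p) (rp p))^-1 * hp p * gg (ip p) (sp p))%g.

Definition fdeg (z : Z) (kk : nat) : G :=
  let p := z.2 in let i := ip p in
  if kk == 0%N then ((gg i (rx i))^-1 * gg i (rp p))%g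
  else if kk == 1%N then dg p
  else ((gg i (sp p))^-1 * (hp p)^-1 * gg i (rx i))%g.

Definition desval (z : Z) (kk : nat) : V :=
  let p := z.2 in let i := ip p in
  if kk == 0%N then b i 1%g (rx i) (rp p)
  else if kk == 1%N then SS`_p
  else b i (hp p)^-1 (sp p) (rx i).

Definition fv (z : Z) (kk : nat) : gvar G := ((B0 + 3 * enum_rank z + kk)%N, fdeg z kk).

Definition trip (s : {perm Z}) (z : Z) : word G := [:: fv z 0; fv (s z) 1; fv z 2].
Definition Tb (s : {perm Z}) (i : 'I_q) : word G :=
  flatten [seq trip s z | z <- enum {: Z} & ip z.2 == i].
Definition blk (s : {perm Z}) (x : gvar G) : word G :=
  if [pick i | xv i == x] is Some i then Tb s i ++ [:: x] else [:: x].
Definition Ew (s : {perm Z}) (w : word G) : word G := flatten (map (blk s) w).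
Definition phi (s : {perm Z}) (x : gvar G) : ncpoly F G := [:: (1, blk s x)].

Definition Pset : {set {perm Z}} :=
  [set s : {perm Z} | [forall z, ((s z).1 == z.1) && (dg (s z).2 == dg z.2)]].
Definition sgn (s : {perm Z}) : F := (-1) ^+ odd_perm s.

Definition fpoly : ncpoly F G :=
  flatten [seq sandwich (sgn (enum_val j)) [::] [::] (substp (phi (enum_val j)) f0)
          | j <- enum 'I_#|Pset|].

Definition Ev (v : gvar G -> V) (s : {perm Z}) : V :=
  \sum_(t <- f0) t.1 *: prodl mul (map v (Ew s t.2)).

Definition FR : seq (gvar G) := [seq fv z kk | z <- enum {: Z}, kk <- iota 0 3].
Definition vsf : seq (gvar G) := vs0 ++ FR.

Lemma substw_phi s w : substw (phi s) w = [:: (1, Ew s w)].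
Proof. by elim: w => //= x w ->; rewrite /mulp /= mulr1. Qed.

Lemma substp_phi s (p : ncpoly F G) : substp (phi s) p = [seq (t.1 * 1, Ew s t.2) | t <- p].
Proof. by elim: p => //= t p IH; rewrite /substp /= substw_phi /= -IH. Qed.

Lemma evalp_fpoly v : evalp mul v fpoly = \sum_(s in Pset) sgn s *: Ev v s.
Proof.
rewrite /evalp /fpoly big_flatten /= big_map [RHS]big_enum_val /= big_enum /=.
apply: eq_bigr => j _.
rewrite /sandwich substp_phi -map_comp big_map /Ev scaler_sumr; apply: eq_bigr => t _ /=.
by rewrite cats0 mulr1 scalerA.
Qed.

Lemma coef_fpoly w : coefp fpoly w =
  \sum_(s in Pset) sgn s * \sum_(t <- f0 | Ew s t.2 == w) t.1.
Proof.
rewrite /coefp /fpoly big_flatten /= big_map [RHS]big_enum_val /= big_enum /=.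
apply: eq_bigr => j _.
rewrite /sandwich substp_phi -map_comp big_map big_distrr /=.
by rewrite big_mkcond [RHS]big_mkcond; apply: eq_bigr => t _ /=; rewrite cats0 mulr1; case: eqP.
Qed.


Lemma fv_fresh z kk : (B0 <= (fv z kk).1)%N.
Proof. by rewrite /= -addnA leq_addr. Qed.

Lemma Tb_fresh s i x : x \in Tb s i -> (B0 <= x.1)%N.
Proof.
move=> /flatten_mapP [z _]; rewrite !inE => /orP[/eqP->|/orP[/eqP->|/eqP->]];
by apply: fv_fresh.
Qed.

Lemma varsp_word (p : ncpoly F G) x : varsp p x -> exists2 t, t \in p & coefp p t.2 != 0 /\ x \in t.2.
Proof. by move=> /hasP [t tp /andP[c xt]]; exists t. Qed.

Lemma xv_vs0 i : xv i \in vs0.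
Proof. by have [t tp [c xt]] := varsp_word (Hxv i); rewrite -(perm_mem (Hf0ml c)). Qed.

Lemma f0_word : exists2 t, t \in f0 & coefp f0 t.2 != 0.
Proof. exact: evalp_nz_coef Hnz0. Qed.

Lemma vs0_nonfresh x : x \in vs0 -> (x.1 < B0)%N.
Proof.
move=> xv0; have [t tp ct] := f0_word.
by apply: (B0_gt tp); rewrite (perm_mem (Hf0ml ct)).
Qed.

Lemma vs0_varsp x : x \in vs0 -> varsp f0 x.
Proof.
move=> xv0; have [t tp ct] := f0_word.
by apply/hasP; exists t => //; rewrite ct (perm_mem (Hf0ml ct)).
Qed.

Lemma b_comp_inj i j h h' (r s : 'I_(k i)) (r' s' : 'I_(k j)) :
  h \in H i -> h' \in H j -> b i h r s = b j h' r' s' -> i = j.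
Proof.
move=> hH hH' e; apply/eqP; apply/negP => /negP ne.
have h1 : (1%g : G) \in H i by apply: group1.
have := Horth r r r' s' ne h1 hH'; rewrite -e Hmt // eqxx mul1g => /eqP.
by rewrite scaler_eq0 (negbTE (Hal h1 hH)) (negbTE (b_nz r s hH)).
Qed.

Lemma xv_inj : injective xv.
Proof.
move=> i j e; have := Hvx i; rewrite e Hvx => /esym.
by apply: b_comp_inj; apply: Hhx.
Qed.

Lemma pick_xv i : [pick j | xv j == xv i] = Some i.
Proof.
case: pickP => [j /eqP /xv_inj -> //|/(_ i)]; by rewrite eqxx.
Qed.

Lemma pick_nxv x : (forall i, xv i != x) -> [pick j | xv j == x] = None.
Proof. by move=> nx; case: pickP => // j; rewrite (negbTE (nx j)). Qed.

Lemma filter_Ew s w : all (fun x => (x.1 < B0)%N) w ->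
  filter (fun x => (x.1 < B0)%N) (Ew s w) = w.
Proof.
elim: w => //= x w IH /andP[xB wB]; rewrite /Ew /= -/(Ew s w) filter_cat IH //.
rewrite /blk; case: pickP => [i _|_]; rewrite /= ?xB //.
rewrite filter_cat /= xB.
suff -> : [seq y <- Tb s i | (y.1 < B0)%N] = [::] by [].
apply/eqP; rewrite -[_ == _]negbK -has_filter; apply/hasPn => y /Tb_fresh.
by rewrite leqNgt.
Qed.

Lemma Ew_inj s w1 w2 : all (fun x => (x.1 < B0)%N) w1 -> all (fun x => (x.1 < B0)%N) w2 ->
  Ew s w1 = Ew s w2 -> w1 = w2.
Proof. by move=> h1 h2 e; rewrite -(filter_Ew s h1) e filter_Ew. Qed.

Lemma f0_nonfresh t : t \in f0 -> all (fun x => (x.1 < B0)%N) t.2.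
Proof. by move=> tf; apply/allP => x; apply: B0_gt. Qed.

Lemma count_flat_map (T U : eqType) (f : T -> seq U) (a : pred U) s :
  count a (flatten (map f s)) = (\sum_(x <- s) count a (f x))%N.
Proof. by elim: s => [|x s IH]; rewrite ?big_nil ?big_cons //= count_cat IH. Qed.

Lemma count_sum (T : eqType) (a : pred T) s : count a s = (\sum_(x <- s) a x)%N.
Proof. by elim: s => [|x s IH]; rewrite ?big_nil ?big_cons //= IH. Qed.

Lemma sum_enumZ (f : Z -> nat) : (\sum_(z <- enum {: Z}) f z)%N = (\sum_(z : Z) f z)%N.
Proof. by rewrite big_enum. Qed.

Lemma count_Tb_all s (a : pred (gvar G)) :
  (\sum_(i : 'I_q) count a (Tb s i))%N =
  (\sum_(z : Z) (a (fv z 0) + a (fv z 1) + a (fv z 2)))%N.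
Proof.
transitivity (\sum_(z : Z) count a (trip s z))%N.
  rewrite [RHS](partition_big (fun z : Z => ip z.2) predT) //=.
  apply: eq_bigr => i _; rewrite /Tb count_flat_map big_filter big_enum_cond /=.
  by apply: eq_bigl => z.
rewrite /trip; under eq_bigr => z _ do rewrite /= addn0 addnA.
rewrite !big_split /=; congr (_ + _)%N; congr (_ + _)%N.
by rewrite [RHS](reindex_inj (@perm_inj _ s)).
Qed.

Lemma count_blk s (a : pred (gvar G)) :
  (\sum_(x <- vs0) count a (blk s x))%N = (count a vs0 + \sum_(i : 'I_q) count a (Tb s i))%N.
Proof.
have E : forall x, count a (blk s x) = ((\sum_(i | xv i == x) count a (Tb s i)) + a x)%N.
  move=> x; rewrite /blk; case: pickP => [i0 /eqP xi0|nx].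
    rewrite count_cat /= addn0; congr (_ + _)%N.
    rewrite (big_pred1 i0) // => i; rewrite -xi0 /=; apply/eqP/eqP => [/xv_inj//|->//].
  rewrite big_pred0 => [|i]; last by rewrite nx.
  by rewrite /= addn0.
under eq_bigr => x _ do rewrite E.
rewrite big_split /= addnC -count_sum; congr (_ + _)%N.
rewrite (exchange_big_dep predT) //=; apply: eq_bigr => i _.
rewrite -big_filter (@eq_filter _ _ (pred1 (xv i))); last by move=> x; rewrite /= eq_sym.
by rewrite filter_pred1_uniq // ?xv_vs0 // big_seq1.
Qed.

Lemma count_FR (a : pred (gvar G)) :
  count a FR = (\sum_(z : Z) (a (fv z 0) + a (fv z 1) + a (fv z 2)))%N.
Proof.
rewrite /FR /allpairs count_flat_map big_enum /=.
by apply: eq_bigr => z _; rewrite /= addn0 addnA.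
Qed.

Lemma perm_Ew s u : perm_eq u vs0 -> perm_eq (Ew s u) vsf.
Proof.
move=> pu; apply/seq.permP => a.
rewrite /Ew count_flat_map (perm_big _ pu) count_blk count_Tb_all /vsf count_cat count_FR.
by [].
Qed.

Lemma fv_inj z z' kk kk' : (kk < 3)%N -> (kk' < 3)%N -> fv z kk = fv z' kk' -> z = z' /\ kk = kk'.
Proof.
move=> h1 h2 [] e _.
have {e} : (3 * enum_rank z + kk = 3 * enum_rank z' + kk')%N by move: e; rewrite -!addnA => /addnI.
move=> e.
have [e1 e2] : (enum_rank z : nat) = enum_rank z' /\ kk = kk'.
  move: e h1 h2; move: (nat_of_ord (enum_rank z)) (nat_of_ord (enum_rank z')) => a c; lia.
by split=> //; apply: enum_rank_inj; apply: val_inj.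
Qed.

Lemma FR_uniq : uniq FR.
Proof.
apply: allpairs_uniq; rewrite ?enum_uniq ?iota_uniq //.
move=> [z kk] [z' kk'] /allpairsP [[z1 k1] [_ k1in [-> ->]]].
move=> /allpairsP [[z2 k2] [_ k2in [-> ->]]] /= e.
move: k1in k2in; rewrite !mem_iota /= => k1lt k2lt.
by case: (fv_inj k1lt k2lt e) => -> ->.
Qed.

Lemma FR_fresh x : x \in FR -> (B0 <= x.1)%N.
Proof. by move=> /allpairsP [[z kk] [_ _ ->]]; apply: fv_fresh. Qed.

Lemma vsf_uniq : uniq vsf.
Proof.
rewrite /vsf cat_uniq Hvs0u FR_uniq andbT /=; apply/hasPn => x /FR_fresh.
by apply: contraL => /vs0_nonfresh; rewrite -leqNgt.
Qed.

Lemma coef_fpoly_nz w : coefp fpoly w != 0 -> perm_eq w vsf.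
Proof.
rewrite coef_fpoly => nz.
have [s sP cs] : exists2 s, s \in Pset & \sum_(t <- f0 | Ew s t.2 == w) t.1 != 0.
  apply/exists_inP; apply: contraR nz => /exists_inPn H0.
  by apply/eqP; apply: big1 => s /H0 /negPn /eqP ->; rewrite mulr0.
have [t0 t0f /eqP et0] : exists2 t0, t0 \in f0 & Ew s t0.2 == w.
  apply/hasP; apply: contraR cs => /hasPn H0.
  by apply/eqP; apply: big1_seq => t /andP[e tf]; move: (H0 t tf); rewrite e.
have Ec : \sum_(t <- f0 | Ew s t.2 == w) t.1 = coefp f0 t0.2.
  rewrite /coefp big_seq_cond [RHS]big_seq_cond; apply: eq_bigl => t.
  case tf: (t \in f0) => //=; rewrite -et0; apply/eqP/eqP => [|->//].
  by apply: Ew_inj; apply: f0_nonfresh.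
move: cs; rewrite Ec.
by move/Hf0ml => pt; rewrite -et0; apply: perm_Ew.
Qed.

Lemma fpoly_ml : multilinear fpoly.
Proof.
exists vsf; split; [by rewrite size_cat (leq_trans Hvs0) ?leq_addr | exact: vsf_uniq | exact: coef_fpoly_nz].
Qed.

Lemma fpoly_varsp v x : evalp mul v fpoly != 0 -> x \in vsf -> varsp fpoly x.
Proof.
move=> /evalp_nz_coef [t tp ct] xv'; apply/hasP; exists t => //.
by rewrite ct (perm_mem (coef_fpoly_nz ct)).
Qed.

Lemma Ew_ext (v : gvar G -> V) (s1 s2 : {perm Z}) w : (forall y, v (fv (s1 y) 1) = v (fv (s2 y) 1)) ->
  map v (Ew s1 w) = map v (Ew s2 w).
Proof.
move=> e; rewrite /Ew !map_flatten -!map_comp; congr flatten; apply: eq_map => x /=.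
rewrite /blk; case: pickP => // i _; rewrite !map_cat; congr (_ ++ _).
rewrite /Tb !map_flatten -!map_comp; congr flatten; apply: eq_map => z /=.
by rewrite e.
Qed.

Lemma Ev_ext (v : gvar G -> V) (s1 s2 : {perm Z}) : (forall y, v (fv (s1 y) 1) = v (fv (s2 y) 1)) -> Ev v s1 = Ev v s2.
Proof. by move=> e; rewrite /Ev; apply: eq_bigr => t _; rewrite (Ew_ext _ e). Qed.

Lemma in_Pset (s : {perm Z}) : reflect (forall z, (s z).1 = z.1 /\ dg (s z).2 = dg z.2) (s \in Pset).
Proof.
rewrite inE; apply: (iffP forallP) => [H0 z|H0 z].
  by have /andP[/eqP -> /eqP ->] := H0 z.
by have [-> ->] := H0 z; rewrite !eqxx.
Qed.

Lemma Pset1 : 1%g \in Pset.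
Proof. by apply/in_Pset => z; rewrite perm1. Qed.

Lemma PsetM (s t : {perm Z}) : s \in Pset -> t \in Pset -> (s * t)%g \in Pset.
Proof.
move=> /in_Pset Hs /in_Pset Ht; apply/in_Pset => z; rewrite permM.
by have [e1 e2] := Hs z; have [e3 e4] := Ht (s z); rewrite e3 e4.
Qed.

Lemma tperm_Pset (c : 'I_M) p p' : dg p = dg p' -> tperm (c, p) (c, p') \in Pset.
Proof.
move=> e; apply/in_Pset => z; case: tpermP => [->|->|] //=; by rewrite e.
Qed.

Hypothesis Hch : [pchar F] =i pred0.

Lemma alt_zero v z1 z2 : z1 != z2 -> tperm z1 z2 \in Pset -> v (fv z1 1) = v (fv z2 1) ->
  \sum_(s in Pset) sgn s *: Ev v s = 0.
Proof.
move=> ne tP ev; set S := \sum_(s in Pset) _.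
have SN : S = - S.
  rewrite {1}/S (reindex_inj (mulIg (tperm z1 z2))) /= /S -sumrN.
  apply: eq_big => s.
    apply/idP/idP => h; last exact: PsetM h tP.
    by have := PsetM h tP; rewrite -mulgA tperm2 mulg1.
  move=> _; rewrite /sgn (odd_permM s) odd_tperm ne.
  rewrite (@Ev_ext v _ s); last first.
    by move=> y; rewrite permM; case: tpermP => // ->.
  by case: (odd_perm s); rewrite /= ?expr1 ?expr0 ?scaleN1r ?scale1r ?opprK.
have : (2%:R : F) *: S = 0 by rewrite mulr2n scalerDl scale1r {1}SN addNr.
move/eqP; rewrite scaler_eq0 => /orP[|/eqP//].
by rewrite ((pcharf0P _).1 Hch 2).
Qed.

Lemma fv_FR z kk : (kk < 3)%N -> fv z kk \in vsf.
Proof.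
move=> lt; rewrite /vsf mem_cat; apply/orP; right.
by apply/allpairsP; exists (z, kk); rewrite mem_enum mem_iota.
Qed.

Lemma good_copy v : admissible deg D fpoly v -> evalp mul v fpoly != 0 ->
  exists c : 'I_M, forall p, in_ss_basis D (v (fv (c, p) 1)).
Proof.
move=> adm nz; apply: NNPP => Hn.
have Hc : forall c : 'I_M, exists p, v (fv (c, p) 1) \in J_sp D.
  move=> c; apply: NNPP => Hn2; apply: Hn; exists c => p; apply: NNPP => Hn3.
  apply: Hn2; exists p.
  have [Hss|[l ->]] := (adm _ (fpoly_varsp nz (fv_FR (c, p) (isT : (1 < 3)%N)))).1.
    by case: Hn3.
  exact: bJ_in.
have [pc Hpc] := fin_all_exists Hc.
case/eqP: nz; rewrite evalp_coef big1_seq // => w /andP[_ wi].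
have [cw|/negPn/eqP->] := boolP (coefp fpoly w != 0); last by rewrite scale0r.
have pw := coef_fpoly_nz cw.
rewrite (prodl_Jzero Hab Hideal HnJ) ?scaler0 //.
rewrite count_map.
set L := [seq fv (c, pc c) 1 | c <- enum 'I_M].
have uL : uniq L.
  rewrite map_inj_uniq ?enum_uniq // => c c' e.
  by have [[e1 _] _] := fv_inj (isT : (1 < 3)%N) (isT : (1 < 3)%N) e; move: e1; case.
have := uniq_leq_size (s2 := filter (preim v (fun x => x \in J_sp D)) w) uL.
rewrite size_map size_enum_ord size_filter; apply => x /mapP [c _ ->].
rewrite mem_filter /= Hpc (perm_mem pw) fv_FR //.
Qed.

Lemma ss_nz x : in_ss_basis D x -> x != 0.
Proof. by move/ss_in_SS/SS_nz. Qed.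

Lemma copy_inj v c : admissible deg D fpoly v -> evalp mul v fpoly != 0 ->
  (forall p, in_ss_basis D (v (fv (c, p) 1))) -> injective (fun p => v (fv (c, p) 1)).
Proof.
move=> adm nz Hss p p' /= e; apply/eqP; apply/negP => /negP ne.
have dgp p1 : v (fv (c, p1) 1) \in deg (dg p1).
  exact: (adm _ (fpoly_varsp nz (fv_FR (c, p1) (isT : (1 < 3)%N)))).2.
have edg : dg p = dg p' by apply: (deg_uniq (ss_nz (Hss p))) => //; rewrite e.
case/eqP: nz; rewrite evalp_fpoly; apply: (alt_zero (z1 := (c, p)) (z2 := (c, p'))) => //.
  by apply: contra ne => /eqP [->].
exact: tperm_Pset.
Qed.

Lemma copy_surj v c : admissible deg D fpoly v -> evalp mul v fpoly != 0 ->
  (forall p, in_ss_basis D (v (fv (c, p) 1))) ->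
  forall i h r s, h \in H i -> exists p, v (fv (c, p) 1) = b i h r s.
Proof.
move=> adm nz Hss i h r s hH.
have Hlt p : (index (v (fv (c, p) 1)) SS < N)%N by rewrite index_mem ss_in_SS.
pose g p := Ordinal (Hlt p).
have ginj : injective g.
  move=> p p' /(congr1 val) /= e; apply: (copy_inj adm nz Hss) => /=.
  by rewrite -(nth_index 0 (ss_in_SS (Hss p))) e nth_index // ss_in_SS.
have [gi gK ginvK] := injF_bij ginj.
have bS := b_in_SS r s hH.
have ilt : (index (b i h r s) SS < N)%N by rewrite index_mem.
exists (gi (Ordinal ilt)).
have := congr1 val (ginvK (Ordinal ilt)); rewrite /= => e.
by rewrite -(nth_index 0 (ss_in_SS (Hss _))) e nth_index.
Qed.

Lemma fpoly_strong v : admissible deg D fpoly v -> evalp mul v fpoly != 0 ->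
  forall (i : 'I_q) h r s, h \in H i -> exists x, varsp fpoly x /\ v x = b i h r s.
Proof.
move=> adm nz i h r s hH.
have [c Hss] := good_copy adm nz.
have [p e] := copy_surj adm nz Hss r s hH.
by exists (fv (c, p) 1); split=> //; apply: (fpoly_varsp nz); apply: fv_FR.
Qed.

Lemma trip_zero_gen i i' h h' (r s rr : 'I_(k i)) (r' s' : 'I_(k i')) :
  h \in H i -> h' \in H i' -> b i' h' r' s' != b i h r s ->
  ((gg i' r')^-1 * h' * gg i' s' = (gg i r)^-1 * h * gg i s)%g ->
  mul (mul (b i 1 rr r) (b i' h' r' s')) (b i h^-1 s rr) = 0.
Proof.
move=> hH hH' nb edg.
have h1 : (1%g : G) \in H i by apply: group1.
have [ei|nei] := eqVneq i i'; last by rewrite Horth // (mul0v Hab).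
subst i'; rewrite Hmt //; case: eqP => [er|_]; last by rewrite (mul0v Hab).
subst r'; rewrite mul1g (mulZv Hab) Hmt ?groupV //; case: eqP => [es|_]; last by rewrite scaler0.
subst s'; move/mulIg/mulgI: edg => eh; by rewrite eh eqxx in nb.
Qed.

Definition eI (i : 'I_q) : V := b i 1 (rx i) (rx i).
Definition mu (z : Z) : F := al (ip z.2) 1 (hp z.2) * al (ip z.2) (hp z.2) (hp z.2)^-1.

Lemma mu_nz z : mu z != 0.
Proof.
have [hH _] := Hdec z.2.
by rewrite mulf_neq0 // Hal ?groupV ?group1.
Qed.

Definition vstar (x : gvar G) : V :=
  let w := if [pick zk : Z * 'I_3 | fv zk.1 zk.2 == x] is Some zk then desval zk.1 zk.2 else v0 x in
  if w \in deg x.2 then w else 0.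

Lemma vstar_graded : graded_eval deg vstar.
Proof. by move=> x; rewrite /vstar; case: ifP => // _; rewrite mem0v. Qed.

Lemma desval_deg z kk : (kk < 3)%N -> desval z kk \in deg (fdeg z kk).
Proof.
have [hH e] := Hdec z.2.
rewrite /desval /fdeg; case: kk => [|[|[|//]]] _ /=.
- by have := Hdeg (rx (ip z.2)) (rp z.2) (group1 (H (ip z.2))); rewrite mulg1.
- by rewrite e; apply: Hdeg.
by apply: Hdeg; rewrite groupV.
Qed.

Lemma vstar_fv z kk : (kk < 3)%N -> vstar (fv z kk) = desval z kk.
Proof.
move=> lt; rewrite /vstar; case: pickP => [[z' k'] /eqP /= e|/(_ (z, Ordinal lt))]; last by rewrite eqxx.
have [-> ek] := fv_inj (ltn_ord k') lt e; rewrite ek.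
by rewrite desval_deg.
Qed.

Lemma vstar_nf x : (x.1 < B0)%N -> v0 x \in deg x.2 -> vstar x = v0 x.
Proof.
move=> lt dx; rewrite /vstar; case: pickP => [[z' k'] /eqP /= e|_]; last by rewrite dx.
by have := fv_fresh z' k'; rewrite e leqNgt lt.
Qed.

Lemma vstar_vs0 x : x \in vs0 -> vstar x = v0 x.
Proof.
move=> xv0; apply: vstar_nf; first exact: vs0_nonfresh.
exact: (Hadm0 (vs0_varsp xv0)).2.
Qed.

Lemma trip_val_id z : prodl mul (map vstar (trip 1 z)) = mu z *: eI (ip z.2).
Proof.
rewrite /trip perm1 /= !vstar_fv // /desval /=.
have [hH ->] := Hdec z.2.
rewrite Hmt ?group1 // eqxx mul1g (mulZv Hab) Hmt ?groupV // eqxx mulgV scalerA.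
by [].
Qed.

Lemma trip_val_zero s z : s \in Pset -> s z != z -> prodl mul (map vstar (trip s z)) = 0.
Proof.
move=> /in_Pset sP nz; rewrite /trip /= !vstar_fv // /desval /=.
have [e1 e2] := sP z.
have [hH _] := Hdec z.2.
have [hH' ->] := Hdec (s z).2.
apply: trip_zero_gen => //.
have [_ <-] := Hdec z.2; have [_ <-] := Hdec (s z).2.
rewrite nth_uniq ?SS_uniq //; apply: contra nz => /eqP e.
apply/eqP; move: e e1; case: (s z) => c p /= e ->; case: z {sP e2 hH hH'} e => c' p' /= e.
by congr pair; apply: val_inj.
Qed.

Definition Lz (i : 'I_q) : seq Z := [seq z <- enum {: Z} | ip z.2 == i].

Lemma Ew_prod v s w : prodl mul (map v (Ew s w)) = prodl mul (map (fun x => prodl mul (map v (blk s x))) w).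
Proof.
rewrite /Ew map_flatten prodl_flatten //; first by rewrite -!map_comp.
apply/allP => l /mapP [y /mapP [x _ ->] ->]; rewrite /blk.
case: [pick i | xv i == x] => [i|] //=.
by rewrite map_cat; case: (map v _).
Qed.

Lemma blk_prod_xv v s i : prodl mul (map v (blk s (xv i))) =
  prodl mul (map (fun z => prodl mul (map v (trip s z))) (Lz i) ++ [:: v (xv i)]).
Proof.
rewrite /blk pick_xv /Tb.
have -> : flatten [seq trip s z | z <- enum {: Z} & ip z.2 == i] ++ [:: xv i] =
          flatten ([seq trip s z | z <- Lz i] ++ [:: [:: xv i]]) by rewrite flatten_cat /=.
rewrite map_flatten prodl_flatten //; first by rewrite !map_cat /= -!map_comp.
apply/allP => l /mapP [l']; rewrite mem_cat => /orP[/mapP [z _ ->] ->|] //.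
by rewrite inE => /eqP -> ->.
Qed.

Lemma blk_prod_nxv v s x : (forall i, xv i != x) -> prodl mul (map v (blk s x)) = v x.
Proof. by move=> nx; rewrite /blk pick_nxv. Qed.

Lemma Ev_zero s : s \in Pset -> s != 1%g -> Ev vstar s = 0.
Proof.
move=> sP s1.
have [z nz] : exists z, s z != z.
  apply: NNPP => Hn; case/eqP: s1; apply/permP => z; rewrite perm1.
  by apply: NNPP => Hn2; apply: Hn; exists z; apply/eqP.
rewrite /Ev (group_sum (fun u => prodl mul (map vstar (Ew s u)))) big1_seq // => u /andP[_ ui].
have [cu|/negPn/eqP->] := boolP (coefp f0 u != 0); last by rewrite scale0r.
rewrite Ew_prod (prodl0 Hab) ?scaler0 //.
apply/mapP; exists (xv (ip z.2)); first by rewrite (perm_mem (Hf0ml cu)) xv_vs0.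
rewrite blk_prod_xv (prodl0 Hab) //; rewrite mem_cat; apply/orP; left.
apply/mapP; exists z; last by rewrite trip_val_zero.
by rewrite mem_filter eqxx mem_enum.
Qed.

Lemma chain i (l : seq F) : all (fun c => c != 0) l ->
  exists2 kap, kap != 0 &
  prodl mul ([seq c *: eI i | c <- l] ++ [:: b i (hx i) (rx i) (sx i)]) = kap *: b i (hx i) (rx i) (sx i).
Proof.
have h1 := group1 (H i).
case: l => [|c l] /=; first by exists 1; rewrite ?oner_eq0 ?scale1r.
move=> /andP[]; elim: l c => [|d l IH] c cn /=.
  move=> _; exists (c * al i 1 (hx i)); first by rewrite mulf_neq0 ?Hal.
  by rewrite (mulZv Hab) Hmt ?eqxx ?mul1g ?scalerA.
move=> /andP [dn ln].
have := IH (c * d * al i 1 1) _ ln; rewrite /=.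
rewrite (mulZv Hab) (mulvZ Hab) /eI Hmt // eqxx mulg1 !scalerA.
by apply; rewrite !mulf_neq0 ?Hal.
Qed.

Lemma kappa_ex : exists kap : 'I_q -> F, forall i, kap i != 0 /\
  prodl mul (map vstar (blk 1 (xv i))) = kap i *: v0 (xv i).
Proof.
suff Hi : forall i, exists kap : F, kap != 0 /\
  prodl mul (map vstar (blk 1 (xv i))) = kap *: v0 (xv i).
  by have [kap Hk] := fin_all_exists Hi; exists kap.
move=> i; rewrite blk_prod_xv vstar_vs0 ?xv_vs0 // Hvx.
have -> : [seq prodl mul (map vstar (trip 1 z)) | z <- Lz i] = [seq c *: eI i | c <- map mu (Lz i)].
  rewrite -map_comp; apply/eq_in_map => z; rewrite mem_filter => /andP [/eqP e _] /=.
  by rewrite -e; apply: trip_val_id.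
have Hall : all (fun c => c != 0) (map mu (Lz i)).
  by apply/allP => c /mapP [z _ ->]; apply: mu_nz.
by have [kap kn E] := chain i Hall; exists kap; rewrite E.
Qed.

Lemma Ev_one : exists2 C, C != 0 & Ev vstar 1 = C *: evalp mul v0 f0.
Proof.
have [kap Hk] := kappa_ex.
pose cc x := if [pick i | xv i == x] is Some i then kap i else 1.
have Hcc x : x \in vs0 -> prodl mul (map vstar (blk 1 x)) = cc x *: v0 x.
  move=> xv0; rewrite /cc; case: pickP => [i /eqP <-|nx]; first by rewrite (Hk i).2.
  by rewrite blk_prod_nxv ?scale1r ?vstar_vs0 // => i; rewrite nx.
exists (\prod_(x <- vs0) cc x).
  rewrite prodf_seq_neq0; apply/allP => x _ /=; rewrite /cc.
  by case: pickP => [i _|_]; [apply: (Hk i).1|apply: oner_neq0].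
rewrite /Ev (group_sum (fun u => prodl mul (map vstar (Ew 1 u)))) evalp_coef scaler_sumr.
apply: eq_big_seq => u ui.
have [cu|/negPn/eqP->] := boolP (coefp f0 u != 0); last by rewrite !scale0r scaler0.
rewrite Ew_prod.
have -> : [seq prodl mul (map vstar (blk 1 x)) | x <- u] = [seq cc x *: v0 x | x <- u].
  by apply/eq_in_map => x xu; rewrite Hcc // -(perm_mem (Hf0ml cu)).
rewrite (prodl_scale Hab cc v0) (perm_big _ (Hf0ml cu)) !scalerA mulrC.
by [].
Qed.

Lemma fpoly_nonid : nonidentity mul deg fpoly.
Proof.
exists vstar; split; first exact: vstar_graded.
rewrite evalp_fpoly (bigD1 1%g) ?Pset1 //= big1 ?addr0.
  have [C Cn ->] := Ev_one.
  by rewrite /sgn odd_perm1 expr0 scale1r scaler_eq0 negb_or Cn Hnz0.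
move=> s /andP [sP s1]; by rewrite Ev_zero ?scaler0.
Qed.

Lemma wdeg_cat (w1 w2 : word G) : wdeg (w1 ++ w2) = (wdeg w1 * wdeg w2)%g.
Proof. by elim: w1 => /= [|x w IH]; rewrite ?mul1g // IH mulgA. Qed.

Lemma wdeg_flatten1 (l : seq (word G)) : (forall w, w \in l -> wdeg w = 1%g) -> wdeg (flatten l) = 1%g.
Proof.
elim: l => //= w l IH H0; rewrite wdeg_cat H0 ?mem_head // IH ?mul1g // => w' w'l.
by apply: H0; rewrite inE w'l orbT.
Qed.

Lemma wdeg_trip s z : s \in Pset -> wdeg (trip s z) = 1%g.
Proof.
move=> /in_Pset sP; have [_ e2] := sP z.
rewrite /trip /wdeg /= /fdeg /= e2 /dg mulg1.
by rewrite !mulgA !mulgK mulVg.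
Qed.

Lemma wdeg_blk s x : s \in Pset -> wdeg (blk s x) = x.2.
Proof.
move=> sP; rewrite /blk; case: pickP => [i _|_] /=; last by rewrite mulg1.
rewrite wdeg_cat /= mulg1 /Tb wdeg_flatten1 ?mul1g // => w /mapP [z _ ->].
exact: wdeg_trip.
Qed.

Lemma phi_graded s : s \in Pset -> graded_subst (phi s).
Proof.
move=> sP x; split.
  move=> w; rewrite /coefp /phi big_cons big_nil /= addr0.
  case: (eqVneq (blk s x) w) => [<- _|_]; first exact: wdeg_blk.
  by rewrite eqxx.
rewrite /coefp /phi big_cons big_nil /=; case: (eqVneq (blk s x) [::]) => [e|_]; last by [].
by move: e; rewrite /blk; case: [pick i | xv i == x] => [i|] //=; case: (Tb s i).
Qed.

Lemma fpoly_Tideal : in_Tideal f0 fpoly.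
Proof.
exists #|Pset|, (fun j => sgn (enum_val j)), (fun _ => [::]), (fun _ => [::]),
  (fun j => phi (enum_val j)); split => //.
by move=> j; apply: phi_graded; apply: enum_valP.
Qed.

Theorem main_result : exists f : ncpoly F G,
    [/\ multilinear f, strongly_full mul deg D f & in_Tideal f0 f].
Proof.
exists fpoly; split; [exact: fpoly_ml | split; [exact: fpoly_nonid|] | exact: fpoly_Tideal].
move=> v adm nz i h r s hH; exact: fpoly_strong.
Qed.
End Main.

Unset Implicit Arguments.

Theorem proposition4p2 (F : closedFieldType) (G : finGroupType) (V : vectType F)
    (mul : V -> V -> V) (deg : G -> {vspace V}) (D : WMdata F G V)
    (f0 : ncpoly F G) :
  [pchar F] =i pred0 ->
  graded_algebra mul deg ->
  graded_WM mul deg D ->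
  full mul D ->
  multilinear f0 ->
  weakly_full mul deg D f0 ->
  exists f : ncpoly F G,
    [/\ multilinear f, strongly_full mul deg D f & in_Tideal f0 f].
Proof.
move=> Hch [Hab _ Hdir _] [_ [Hal [Hdeg [Hmt [Horth [_ [Hbasis [Hideal [nJ HnJ] _]]]]]]]] _.
move=> [vs0 [Hvs0 Hvs0u Hf0ml]] [v0 [Hadm0 Hnz0 Hw]].
have Hd : forall p : 'I_(size (SS D)), exists u : {i : 'I_(wm_q D) & (G * 'I_(wm_k D i) * 'I_(wm_k D i))%type},
    (projT2 u).1.1 \in wm_H D (projT1 u) /\
    (SS D)`_p = wm_b D (projT1 u) (projT2 u).1.1 (projT2 u).1.2 (projT2 u).2.
  move=> p; have [i [h [r [s [hH e]]]]] := SS_dec (mem_nth 0 (ltn_ord p)).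
  by exists (existT _ i (h, r, s)).
have [u Hu] := fin_all_exists Hd.
have Hx : forall i : 'I_(wm_q D), exists t : (gvar G * G * 'I_(wm_k D i) * 'I_(wm_k D i))%type,
    [/\ varsp f0 t.1.1.1, t.1.1.2 \in wm_H D i & v0 t.1.1.1 = wm_b D i t.1.1.2 t.1.2 t.2].
  move=> i; have [x [vx [h [r [s [hH e]]]]]] := Hw i.
  by exists (x, h, r, s).
have [t Ht] := fin_all_exists Hx.
have Ht1 i := let: And3 a _ _ := Ht i in a.
have Ht2 i := let: And3 _ a _ := Ht i in a.
have Ht3 i := let: And3 _ _ a := Ht i in a.
exact: (main_result Hab Hdir Hdeg Hal Hmt Horth Hbasis Hideal HnJ Hu
   Hvs0 Hvs0u Hf0ml Hadm0 Hnz0 Ht1 Ht2 Ht3 Hch).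
Qed.
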